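(* Let $W\in\mathbb{D}_n$ satisfy the Ground Assumption, and let $\sigma\subset\mathcal{E}$, $\tau\subset\mathcal{I}$. If $\sigma\sqcup\tau\in FP(W)$, then $\sigma\sqcup\tau'\in FP(W)$ for every $\tau'$ with $\tau\subset\tau'\subset\mathcal{I}$.
   Context: Threshold-linear network: $\dot x_i=-x_i+[\sum_j W_{ij}x_j+b_i]_+$ with $[y]_+=\max(0,y)$; a fixed point is $x^*$ with $x^*=[Wx^*+b]_+$. A Dale matrix $W\in\mathbb{D}_n$ is an $n\times n$ real matrix with a partition $[n]=\mathcal{E}\sqcup\mathcal{I}$ such that $W_{ii}=0$, $W_{ji}\ge0$ for all $j$ if $i\in\mathcal{E}$, $W_{ji}\le0$ for all $j$ if $i\in\mathcal{I}$. Ground Assumption: $(I-W)_\sigma$ nonsingular for every nonempty $\sigma\subset[n]$. $FP(W,b)$ is the set of supports $\{i\in[n]:x^*_i>0\}$ of all fixed points $x^*$ of the network $(W,b)$, and $FP(W)=\bigcup_{b\in\mathbb{R}^n_{\ge0}}FP(W,b)$. *)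

(* Defs.v *)
From HB Require Import structures.
From mathcomp Require Import all_boot all_order all_algebra.
From mathcomp Require Import reals.
Set Implicit Arguments. Unset Strict Implicit. Unset Printing Implicit Defensive.
Import Order.TTheory GRing.Theory Num.Theory.
Local Open Scope ring_scope.

Section TLN.
Variables (R : realType) (n : nat).

Definition relu (y : R) : R := Num.max 0 y.

Definition is_fixed_point (W : 'M[R]_n) (b x : 'I_n -> R) : Prop :=
  forall i : 'I_n, x i = relu (\sum_(j < n) W i j * x j + b i).

Definition supp (x : 'I_n -> R) : {set 'I_n} := [set i | 0 < x i].

Definition FPb (W : 'M[R]_n) (b : 'I_n -> R) (s : {set 'I_n}) : Prop :=
  exists x : 'I_n -> R, is_fixed_point W b x /\ supp x = s.

Definition FP (W : 'M[R]_n) (s : {set 'I_n}) : Prop :=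
  exists b : 'I_n -> R, (forall i, 0 <= b i) /\ FPb W b s.

(* W is a Dale matrix w.r.t. the partition [n] = E ⊔ (~: E) (I = ~: E) *)
Definition Dale (W : 'M[R]_n) (E : {set 'I_n}) : Prop :=
  forall i : 'I_n, W i i = 0 /\
    forall j : 'I_n, (i \in E -> 0 <= W j i) /\ (i \notin E -> W j i <= 0).

Definition principal (M : 'M[R]_n) (s : {set 'I_n}) : 'M[R]_#|s| :=
  \matrix_(i < #|s|, j < #|s|) M (enum_val i) (enum_val j).

Definition ground_assumption (W : 'M[R]_n) : Prop :=
  forall s : {set 'I_n}, s != set0 -> \det (principal (1%:M - W) s) != 0.

End TLN.

(* Main.v *)
Require Import Defs.
From HB Require Import structures.
From mathcomp Require Import all_boot all_order all_algebra.
From mathcomp Require Import reals.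
Import Order.TTheory GRing.Theory Num.Theory.
Local Open Scope ring_scope.

Theorem mainTheorem12 (R : realType) (n : nat) (W : 'M[R]_n) (E : {set 'I_n})
  (sigma tau : {set 'I_n}) :
  Dale W E -> ground_assumption W ->
  sigma \subset E -> tau \subset ~: E ->
  FP W (sigma :|: tau) ->
  forall tau' : {set 'I_n}, tau \subset tau' -> tau' \subset ~: E ->
  FP W (sigma :|: tau').
Proof.
move=> HD _ HsE HtE [b [Hb [x [Hfp Hsupp]]]] tau' Htt' Ht'E.
set d := tau' :\: (sigma :|: tau).
pose x' := fun i => x i + (i \in d)%:R.
pose s' := sigma :|: tau'.
pose Wx' := fun i => \sum_(j < n) W i j * x' j.
pose Wx := fun i => \sum_(j < n) W i j * x j.
have xge i : 0 <= x i by rewrite Hfp /relu le_max lexx.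
have Wxle i : Wx i <= x i.
  rewrite [x i]Hfp /relu le_max; apply/orP; right.
  by rewrite /Wx lerDl.
have Wx'le i : Wx' i <= Wx i.
  rewrite /Wx' /Wx /x'.
  under eq_bigr => j _ do rewrite mulrDr.
  rewrite big_split /= gerDl.
  apply: sumr_le0 => j _.
  case jd: (j \in d); last by rewrite mulr0.
  rewrite mulr1.
  have : j \in ~: E by apply: (subsetP Ht'E); move: jd; rewrite inE => /andP[].
  rewrite inE => jE.
  by have [_ /(_ i) [_ ->]] := HD j.
have x'ge i : x i <= x' i by rewrite /x' lerDl ler0n.
exists (fun i => if i \in s' then x' i - Wx' i else 0); split.
  move=> i; case: ifP => _ //.
  rewrite subr_ge0; apply: le_trans (Wx'le i) _; apply: le_trans (Wxle i) _; exact: x'ge.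
exists x'; split.
  move=> i; rewrite /relu -/(Wx' i).
  case: ifP => his.
    rewrite addrC subrK max_r //; apply: le_trans (xge i) (x'ge i).
  have hx : x i = 0.
    apply/eqP; rewrite eq_le xge andbT leNgt; apply/negP => hp.
    have : i \in supp x by rewrite inE.
    rewrite Hsupp => hi; move: his; rewrite /s' !inE.
    move: hi; rewrite !inE => /orP[->//|/(subsetP Htt')->]; by rewrite orbT.
  have hd : (i \in d) = false.
    by rewrite /d !inE; move: his; rewrite /s' inE => /negbT; rewrite negb_or => /andP[_ /negbTE ->]; rewrite andbF.
  rewrite /x' hd hx addr0 addr0 max_l //.
  apply: le_trans (Wx'le i) _; rewrite -hx; exact: Wxle.
apply/setP => i; rewrite !inE /x'.
have [hp|] := boolP (0 < x i).
  have : i \in supp x by rewrite inE.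
  rewrite Hsupp !inE => /orP[->//|/(subsetP Htt')->]; rewrite ?orbT.
    by rewrite (lt_le_trans hp) // lerDl ler0n.
  by rewrite (lt_le_trans hp) // lerDl ler0n.
rewrite -leNgt => hle.
have hx : x i = 0 by apply/eqP; rewrite eq_le hle xge.
have : i \notin supp x by rewrite inE hx ltxx.
rewrite Hsupp !inE negb_or => /andP[/negbTE hs /negbTE ht].
rewrite hx add0r hs ht /=.
by case: (i \in tau'); rewrite ?ltr01 ?ltxx.
Qed.
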